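(* Let $G$ be a totally disconnected, locally compact group and $\mathcal{H}$ a group of automorphisms of $G$. Then the set $\mathcal{H}_{FC_d}:=\{\varphi\in\mathcal{H}:\varphi^{\mathcal{H}}\text{ is bounded}\}$ is a normal subgroup of $\mathcal{H}$, and for any such $\mathcal{H}$ we have $(\mathcal{H}_{FC_d})_{FC_d}=\mathcal{H}_{FC_d}$.
   Context: Automorphisms are continuous with continuous inverse. $\mathcal{B}(G)$ is the set of compact, open subgroups of $G$ with metric $d(V,W)=\log\bigl(|V:V\cap W|\cdot|W:W\cap V|\bigr)$. A set $B$ of automorphisms of $G$ is bounded if $B.V=\{\beta(V):\beta\in B\}$ has bounded diameter in $\mathcal{B}(G)$ for some (equivalently every) $V\in\mathcal{B}(G)$. For a group $\mathcal{K}$ of automorphisms and $\varphi\in\mathcal{K}$, $\varphi^{\mathcal{K}}=\{\psi\varphi\psi^{-1}:\psi\in\mathcal{K}\}$, and $\mathcal{K}_{FC_d}=\{\varphi\in\mathcal{K}:\varphi^{\mathcal{K}}\text{ bounded}\}$; in particular $(\mathcal{H}_{FC_d})_{FC_d}$ uses conjugation by elements of $\mathcal{H}_{FC_d}$ only. *)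

(* Defs.v *)
From HB Require Import structures.

From mathcomp Require Import all_boot all_order.
From mathcomp Require Import finmap boolp classical_sets functions cardinality topology.
From Stdlib Require Rdefinitions Raxioms Rpower.

Set Implicit Arguments. Unset Strict Implicit. Unset Printing Implicit Defensive.
Local Open Scope classical_set_scope.


Section TDLC.
Variable G : topologicalType.
Variables (mul : G -> G -> G) (inv : G -> G) (one : G).

(* G is a (Hausdorff-free formulation of a) topological group *)
Definition is_topological_group : Prop :=
  [/\ (forall x y z, mul x (mul y z) = mul (mul x y) z),
      (forall x, mul one x = x /\ mul x one = x),
      (forall x, mul (inv x) x = one /\ mul x (inv x) = one),
      continuous (fun p : G * G => mul p.1 p.2) &
      continuous inv].

Definition is_tdlc_group : Prop :=
  [/\ is_topological_group,
      totally_disconnected [set: G] &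
      locally_compact [set: G]].

Definition is_subgroup (V : set G) : Prop :=
  [/\ V one, (forall x y, V x -> V y -> V (mul x y)) & (forall x, V x -> V (inv x))].

Definition compact_open_subgroup (V : set G) : Prop :=
  [/\ is_subgroup V, compact V & open V].

Definition lcoset (x : G) (H : set G) : set G := [set mul x h | h in H].

(* index |V : H| = number of left cosets x H, x in V (finite for the uses below) *)
Definition index (V H : set G) : nat := (#|` fset_set [set lcoset x H | x in V] |)%fset.

Definition dist (V W : set G) : Rdefinitions.R :=
  Rpower.ln (Raxioms.INR (index V (V `&` W) * index W (W `&` V))).

Definition inverse_fun (f g : G -> G) : Prop := (forall x, g (f x) = x) /\ (forall x, f (g x) = x).

Definition is_automorphism (f : G -> G) : Prop :=
  [/\ (forall x y, f (mul x y) = mul (f x) (f y)),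
      continuous f &
      exists g, inverse_fun f g /\ continuous g].

Definition automorphism_group (K : set (G -> G)) : Prop :=
  [/\ (forall f, K f -> is_automorphism f),
      K id,
      (forall f g, K f -> K g -> K (f \o g)) &
      (forall f, K f -> exists2 g, K g & inverse_fun f g)].

Definition bounded_set (B : set (G -> G)) : Prop :=
  exists V, compact_open_subgroup V /\
    exists M : Rdefinitions.R, forall b c, B b -> B c -> Rdefinitions.Rle (dist (b @` V) (c @` V)) M.

Definition conj_class (K : set (G -> G)) (phi : G -> G) : set (G -> G) :=
  [set f | exists psi psi', [/\ K psi, inverse_fun psi psi' & f = psi \o phi \o psi']].

Definition FCd (K : set (G -> G)) : set (G -> G) :=
  [set phi | K phi /\ bounded_set (conj_class K phi)].

Definition normal_subgroup (N K : set (G -> G)) : Prop :=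
  [/\ N `<=` K, N id,
      (forall f g, N f -> N g -> N (f \o g)),
      (forall f g, N f -> inverse_fun f g -> N g) &
      (forall psi psi' f, K psi -> inverse_fun psi psi' -> N f -> N (psi \o f \o psi'))].

End TDLC.

(* Main.v *)
Require Import Defs.
From mathcomp Require Import all_boot boolp classical_sets topology.
From mathcomp Require Import finmap cardinality.
From Stdlib Require Import Rdefinitions Raxioms Rpower RIneq Lra.

Set Implicit Arguments. Unset Strict Implicit. Unset Printing Implicit Defensive.
Local Open Scope classical_set_scope.


Lemma set0_mem {T : Type} (A : set T) x : A = set0 -> A x -> False.
Proof. by move=> ->. Qed.

Lemma compact_sep {T : topologicalType} (K : set T) (S : set_system T) :
  Filter S -> compact K ->
  (forall y, K y -> exists O N, [/\ open O, O y, S N & O `&` N = set0]) ->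
  exists2 N, S N & K `&` closure N = set0.
Proof.
move=> FS cK sep; apply: contrapT => hn.
have ne : forall N, S N -> (K `&` closure N) !=set0.
  move=> N SN; apply/set0P; apply/eqP => h; apply: hn; by exists N.
pose F := filter_from S (fun N => K `&` closure N).
have FF : Filter F.
  apply: filter_from_filter; first by exists setT; exact: filterT.
  move=> i j Si Sj; exists (i `&` j); first exact: filterI.
  by move=> x [Kx /closureI [ci cj]].
have PF : ProperFilter F by apply: filter_from_proper.
have FK : F K by exists setT; [exact: filterT | move=> x []].
have [y [Ky cly]] := cK F PF FK.
have [O [N [oO Oy SN ON]]] := sep y Ky.
have FN : F (K `&` closure N) by exists N.
have [w [[Kw clw] Ow]] := cly _ O FN (open_nbhs_nbhs (conj oO Oy)).
have [v [Nv Ov]] := clw O (open_nbhs_nbhs (conj oO Ow)).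
exact: (set0_mem ON (conj Ov Nv)).
Qed.

Lemma point_sep {T : topologicalType} (hT : hausdorff_space T) (K : set T) x :
  compact K -> ~ K x -> exists2 N, nbhs x N & K `&` closure N = set0.
Proof.
move=> cK nKx; apply: compact_sep => // y Ky.
have xy : x != y by apply/eqP => e; subst.
move: hT; rewrite open_hausdorff => /(_ _ _ xy) [[A B]] /= [xA yB] [oA oB AB0].
rewrite in_setE in xA; rewrite in_setE in yB.
exists B, A; split => //; first exact: open_nbhs_nbhs.
by rewrite setIC; apply/eqP.
Qed.

Lemma set_sep {T : topologicalType} (hT : hausdorff_space T) (A1 A2 : set T) :
  compact A1 -> compact A2 -> A1 `&` A2 = set0 ->
  exists U1 U2, [/\ open U1, open U2, A1 `<=` U1, A2 `<=` U2 & U1 `&` U2 = set0].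
Proof.
move=> c1 c2 d.
have [N SN h] : exists2 N, set_nbhs A1 N & A2 `&` closure N = set0.
  apply: compact_sep => // y A2y.
  have nA1y : ~ A1 y by move=> A1y; exact: (set0_mem d (conj A1y A2y)).
  have [M nM hM] := point_sep hT c1 nA1y.
  exists (M°), (~` closure M); split.
  - exact: open_interior.
  - exact: nbhs_singleton (nbhs_interior nM).
  - apply/set_nbhsP; exists (~` closure M); split => //.
      exact: closed_openC (@closed_closure _ _).
    by move=> z A1z cz; exact: (set0_mem hM (conj A1z cz)).
  - apply/seteqP; split; last exact: sub0set.
    move=> z [/interior_subset Mz ncz]; apply: ncz; exact: subset_closure.
case/set_nbhsP: SN => C [oC A1C CN].
exists C, (~` closure N); split => //.
- exact: closed_openC (@closed_closure _ _).
- by move=> z A2z cz; exact: (set0_mem h (conj A2z cz)).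
- apply/seteqP; split; last exact: sub0set.
  move=> z [Cz ncz]; apply: ncz; apply: subset_closure; exact: CN.
Qed.

Section Grp.
Variable G : topologicalType.
Variables (mul : G -> G -> G) (inv : G -> G) (one : G).
Hypothesis TG : is_topological_group mul inv one.

Lemma mulA x y z : mul x (mul y z) = mul (mul x y) z.
Proof. by case: TG. Qed.
Lemma mul1g x : mul one x = x.
Proof. by case: TG => _ h _ _ _; case: (h x). Qed.
Lemma mulg1 x : mul x one = x.
Proof. by case: TG => _ h _ _ _; case: (h x). Qed.
Lemma mulVg x : mul (inv x) x = one.
Proof. by case: TG => _ _ h _ _; case: (h x). Qed.
Lemma mulgV x : mul x (inv x) = one.
Proof. by case: TG => _ _ h _ _; case: (h x). Qed.
Lemma mulKg x y : mul (inv x) (mul x y) = y.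
Proof. by rewrite mulA mulVg mul1g. Qed.
Lemma mulVKg x y : mul x (mul (inv x) y) = y.
Proof. by rewrite mulA mulgV mul1g. Qed.
Lemma mulgK x y : mul (mul y x) (inv x) = y.
Proof. by rewrite -mulA mulgV mulg1. Qed.
Lemma invK x : inv (inv x) = x.
Proof. by rewrite -[LHS]mulg1 -(mulVg x) mulA mulVg mul1g. Qed.
Lemma invM x y : inv (mul x y) = mul (inv y) (inv x).
Proof.
have h : mul (mul x y) (mul (inv y) (inv x)) = one.
  by rewrite -mulA (mulA y) mulgV mul1g mulgV.
by rewrite -(mulKg (mul x y) (mul (inv y) (inv x))) h mulg1.
Qed.
Lemma inv1 : inv one = one.
Proof. by rewrite -[inv one]mul1g mulgV. Qed.

Lemma mul_cont : continuous (fun p : G * G => mul p.1 p.2).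
Proof. by case: TG. Qed.
Lemma inv_cont : continuous inv.
Proof. by case: TG. Qed.

Lemma mul_near a b (S : set G) : nbhs (mul a b) S ->
  exists P Q, [/\ nbhs a P, nbhs b Q & forall x y, P x -> Q y -> S (mul x y)].
Proof.
move=> nS; have := @mul_cont (a, b) S nS.
case=> -[P Q] /= [nP nQ] sPQ; exists P, Q; split => // x y Px Qy.
exact: (sPQ (x, y)).
Qed.

Lemma inv_near a (S : set G) : nbhs (inv a) S -> nbhs a [set x | S (inv x)].
Proof. by move=> nS; exact: (@inv_cont a S nS). Qed.

Lemma lmul_near t a (S : set G) : nbhs (mul t a) S -> nbhs a [set x | S (mul t x)].
Proof.
case/mul_near => P [Q [nP nQ PQ]]; apply: filterS nQ => y Qy.
exact: PQ (nbhs_singleton nP) Qy.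
Qed.

Lemma rmul_near t a (S : set G) : nbhs (mul a t) S -> nbhs a [set x | S (mul x t)].
Proof.
case/mul_near => P [Q [nP nQ PQ]]; apply: filterS nP => y Py.
exact: PQ Py (nbhs_singleton nQ).
Qed.

End Grp.

Section TDLC.
Variable G : topologicalType.
Variables (mul : G -> G -> G) (inv : G -> G) (one : G).
Hypothesis TG : is_topological_group mul inv one.
Hypothesis TD : totally_disconnected [set: G].

Lemma hausdorffG : hausdorff_space G.
Proof.
move=> p q cl.
have z1 : mul (inv p) q = one.
  have hz : closure [set one] (mul (inv p) q).
    move=> B nB.
    have [P [Q [nP nQ PQ]]] := mul_near TG nB.
    have nP' := inv_near TG nP.
    have [y [P'y Qy]] := cl _ _ nP' nQ.
    exists one; split => //; by have := PQ _ _ P'y Qy; rewrite (mulVg TG).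
  have : connected_component [set: G] one (mul (inv p) q).
    exists (closure [set one]) => //; split => //.
      exact: subset_closure.
    apply: connected_closure; exact: connected1.
  by rewrite TD.
by rewrite -(mulVKg TG p q) z1 (mulg1 TG).
Qed.

Section KSec.
Variable K : set G.
Hypotheses (nK : nbhs one K) (cK : compact K) (clK : closed K).

Definition fam (D : set G) := [/\ D `<=` K, closed D, closed (K `\` D) & D one].

Lemma fam_K : fam K.
Proof.
split => //; last exact: nbhs_singleton nK.
by rewrite setDv; exact: closed0.
Qed.

Lemma fam_I D1 D2 : fam D1 -> fam D2 -> fam (D1 `&` D2).
Proof.
case=> s1 c1 k1 o1 [s2 c2 k2 o2]; split => //.
- by move=> x [/s1].
- exact: closedI.
- by rewrite setDIr; apply: closedU.
Qed.

Lemma fam_finite (S : set G) : closed S -> S `<=` K ->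
  (forall x, S x -> exists D, fam D /\ ~ D x) -> exists D, fam D /\ S `&` D = set0.
Proof.
move=> clS SK sep; apply: contrapT => hn.
have ne : forall D, fam D -> (S `&` D) !=set0.
  move=> D fD; apply/set0P; apply/eqP => h; apply: hn; by exists D.
pose F := filter_from fam (fun D => S `&` D).
have FF : Filter F.
  apply: filter_from_filter; first by exists K; exact: fam_K.
  move=> i j fi fj; exists (i `&` j); first exact: fam_I.
  by move=> x [Sx [ix jx]].
have PF : ProperFilter F by apply: filter_from_proper.
have FS : F S by exists K; [exact: fam_K | move=> x []].
have cS : compact S by exact: (subclosed_compact clS cK SK).
have [y [Sy cly]] := cS F PF FS.
have [D [fD nDy]] := sep y Sy.
have FD : F (S `&` D) by exists D.
have oD : open (~` D) by case: fD => _ cD _ _; exact: closed_openC.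
have [w [[Sw Dw] nDw]] := cly _ _ FD (open_nbhs_nbhs (conj oD nDy)).
exact: nDw.
Qed.

Definition Qs := [set x | forall D, fam D -> D x].

Lemma Qs_closed : closed Qs.
Proof.
move=> x clx D fD; case: (fD) => _ cD _ _; apply: cD.
by apply: (closureS _ clx) => y; apply.
Qed.

Lemma Qs_K : Qs `<=` K.
Proof. by move=> x; apply; exact: fam_K. Qed.

Lemma Qs_one : Qs one.
Proof. by move=> D []. Qed.

Lemma Qs_sep (A1 A2 : set G) : closed A1 -> closed A2 -> A1 `<=` Qs -> A2 `<=` Qs ->
  Qs `<=` A1 `|` A2 -> A1 `&` A2 = set0 -> A1 one -> forall y, ~ A2 y.
Proof.
move=> c1 c2 s1 s2 sQ d o1 y A2y.
have cp1 : compact A1 by apply: (subclosed_compact c1 cK); move=> z /s1 /Qs_K.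
have cp2 : compact A2 by apply: (subclosed_compact c2 cK); move=> z /s2 /Qs_K.
have [U1 [U2 [oU1 oU2 A1U1 A2U2 dU]]] := set_sep hausdorffG cp1 cp2 d.
pose S := K `&` ~` U1 `&` ~` U2.
have clS : closed S.
  by apply: closedI; [apply: closedI => //|]; exact: open_closedC.
have SK : S `<=` K by move=> z [[]].
have [D0 [fD0 SD0]] : exists D, fam D /\ S `&` D = set0.
  apply: fam_finite => // x [[Kx nU1x] nU2x].
  have nQx : ~ Qs x.
    by move=> /sQ [/A1U1|/A2U2].
  move/existsNP: nQx => [D] /not_implyP [fD nDx]; by exists D.
case: (fD0) => D0K cD0 cKD0 o0.
have fE : fam (D0 `&` U1).
  split.
  - by move=> z [/D0K].
  - have -> : D0 `&` U1 = D0 `&` ~` U2.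
      apply/seteqP; split => z [D0z].
        move=> U1z; split => // U2z; exact: (set0_mem dU (conj U1z U2z)).
      move=> nU2z; split => //; apply: contrapT => nU1z.
      exact: (set0_mem SD0 (conj (conj (conj (D0K _ D0z) nU1z) nU2z) D0z)).
    by apply: closedI => //; exact: open_closedC.
  - rewrite setDIr; apply: closedU => //.
    by rewrite setDE; apply: closedI => //; exact: open_closedC.
  - by split => //; exact: A1U1.
have [_ U1y] := s2 _ A2y _ fE.
exact: (set0_mem dU (conj U1y (A2U2 _ A2y))).
Qed.

Lemma Qs_connected : connected Qs.
Proof.
move=> B [b Bb] [O oO BO] [C cC BC].
have cQC : closed (Qs `&` C) by apply: closedI => //; exact: Qs_closed.
have cQO : closed (Qs `&` ~` O).
  by apply: closedI; [exact: Qs_closed | exact: open_closedC].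
have cover : Qs `<=` (Qs `&` C) `|` (Qs `&` ~` O).
  move=> x Qx; have [Ox|nOx] := pselect (O x); [left|by right].
  by rewrite -BC BO.
have dis : (Qs `&` C) `&` (Qs `&` ~` O) = set0.
  apply/seteqP; split; last exact: sub0set.
  by move=> x [QCx [_ nOx]]; move: QCx; rewrite -BC BO => -[].
have [Bone|nBone] := pselect (B one).
  have h := @Qs_sep _ _ cQC cQO (fun x => @proj1 _ _) (fun x => @proj1 _ _) cover dis.
  have h' : (Qs `&` C) one by rewrite -BC.
  have := h h'.
  move=> hh; apply/seteqP; split; first by rewrite BO => x [].
  move=> x Qx; rewrite BO; split => //; apply: contrapT => nOx.
  exact: (hh x (conj Qx nOx)).
have cover' : Qs `<=` (Qs `&` ~` O) `|` (Qs `&` C).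
  by move=> x /cover [] ?; [right|left].
have dis' : (Qs `&` ~` O) `&` (Qs `&` C) = set0 by rewrite setIC.
have h := @Qs_sep _ _ cQO cQC (fun x => @proj1 _ _) (fun x => @proj1 _ _) cover' dis'.
have o1 : (Qs `&` ~` O) one.
  split; first exact: Qs_one.
  by move=> Oone; apply: nBone; rewrite BO; split => //; exact: Qs_one.
have := h o1 b; rewrite -BC; by [].
Qed.

Lemma Qs_eq x : Qs x -> x = one.
Proof.
move=> Qx.
have : connected_component [set: G] one x.
  by exists Qs => //; split => //; [exact: Qs_one | exact: Qs_connected].
by rewrite TD.
Qed.

Lemma compact_open_nbhs : exists C, [/\ compact C, open C & C one].
Proof.
pose V := K°.
have Vone : V one by exact: nbhs_singleton (nbhs_interior nK).
pose S := K `&` ~` V.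
have clS : closed S by apply: closedI => //; apply: open_closedC; exact: open_interior.
have [D0 [fD0 SD0]] : exists D, fam D /\ S `&` D = set0.
  apply: fam_finite => //; first by move=> x [].
  move=> x [Kx nVx].
  have nQx : ~ Qs x by move=> /Qs_eq ex; apply: nVx; rewrite ex.
  move/existsNP: nQx => [D] /not_implyP [fD nDx]; by exists D.
case: (fD0) => D0K cD0 cKD0 o0.
exists D0; split => //.
- exact: (subclosed_compact cD0 cK D0K).
- have -> : D0 = V `&` ~` (K `\` D0).
    apply/seteqP; split => z.
      move=> D0z; split; last by move=> [].
      apply: contrapT => nVz.
      exact: (set0_mem SD0 (conj (conj (D0K _ D0z) nVz) D0z)).
    move=> [Vz nz]; apply: contrapT => nD0z; apply: nz; split => //.
    exact: interior_subset.
  apply: openI; first exact: open_interior.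
  exact: closed_openC.
Qed.

End KSec.
End TDLC.

Section Dantzig.
Variable G : topologicalType.
Variables (mul : G -> G -> G) (inv : G -> G) (one : G).
Hypothesis TG : is_topological_group mul inv one.
Hypothesis TD : totally_disconnected [set: G].
Hypothesis LC : locally_compact [set: G].

Lemma cos_exists : exists V, compact_open_subgroup mul inv one V.
Proof.
have [K nK [cK clK]] : exists2 K, nbhs one K & compact K /\ closed K.
  have := LC (x:=one) I; rewrite withinET; by case => K nK h; exists K.
have [C [cC oC Cone]] := compact_open_nbhs TG TD nK cK clK.
have W0 : \forall w \near one, forall c, C c -> C (mul c w).
  move/compact_near_coveringP: cC => cov.
  apply: (cov G (nbhs one) (fun w c => C (mul c w))) => x Cx.
  have nC : nbhs (mul x one) C by rewrite (mulg1 TG); apply: open_nbhs_nbhs.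
  have [P [Q [nP nQ PQ]]] := mul_near TG nC.
  exists (P, Q) => //= -[a b] [Pa Qb]; exact: PQ.
pose S := [set x | forall c, C c -> C (mul c x)].
pose T := [set x | S x /\ S (inv x)].
have TC : T `<=` C by move=> x [Sx _]; rewrite -(mul1g TG x); exact: Sx.
have Tsub : is_subgroup mul inv one T.
  split.
  - by split => c Cc; rewrite ?(inv1 TG) (mulg1 TG).
  - move=> x y [Sx Sx'] [Sy Sy']; split => c Cc.
      by rewrite (mulA TG); apply: Sy; apply: Sx.
    by rewrite (invM TG) (mulA TG); apply: Sx'; apply: Sy'.
  - by move=> x [Sx Sx']; split => //; rewrite (invK TG).
have Tmul : forall x y, T x -> T y -> T (mul x y) by case: Tsub.
have nT : nbhs one T.
  apply: (@filterS _ _ _ (S `&` [set x | S (inv x)])); first by move=> x [].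
  apply: filterI; first exact: W0.
  have := @inv_near _ _ _ _ TG one S; rewrite (inv1 TG); apply; exact: W0.
have oT : open T.
  rewrite openE => t Tt.
  have : nbhs t [set y | T (mul (inv t) y)].
    by apply: (@lmul_near _ _ _ _ TG (inv t) t T); rewrite (mulVg TG).
  apply: filterS => y Ty.
  by rewrite -(mulVKg TG t y); exact: Tmul.
have cT : closed T.
  move=> x clx.
  have nB : nbhs x [set y | T (mul (inv y) x)].
    have nT' : nbhs (mul (inv x) x) T by rewrite (mulVg TG).
    have [P [Q [nP nQ PQ]]] := mul_near TG nT'.
    apply: filterS (inv_near TG nP) => y Py; exact: PQ _ _ Py (nbhs_singleton nQ).
  have [y [Ty By]] := clx _ nB.
  by rewrite -(mulVKg TG y x); exact: Tmul.
exists T; split => //; exact: subclosed_compact cT cC TC.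
Qed.

End Dantzig.

Section Metric.
Variable G : topologicalType.
Variables (mul : G -> G -> G) (inv : G -> G) (one : G).
Hypothesis TG : is_topological_group mul inv one.

Local Notation cos := (compact_open_subgroup mul inv one).
Local Notation lcos := (lcoset mul).

Definition lcov (U H : set G) (s : seq G) :=
  forall u, U u -> exists2 x, x \in s & lcos x H = lcos u H.
Definition kk (U W : set G) := Defs.index mul U (U `&` W).

Lemma lcoset_self (H : set G) x : H one -> lcos x H x.
Proof. by move=> H1; exists one => //; rewrite (mulg1 TG). Qed.

Lemma lcoset_eqP (H : set G) x y : is_subgroup mul inv one H ->
  lcos x H y -> lcos y H = lcos x H.
Proof.
move=> [H1 Hm Hi] [h Hh <-]; apply/seteqP; split => z [h' Hh' <-].
- by exists (mul h h'); [exact: Hm | rewrite (mulA TG)].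
- exists (mul (inv h) h'); first exact: Hm (Hi _ Hh) Hh'.
  by rewrite -(mulA TG) (mulVKg TG).
Qed.

Lemma lcoset_mulV (H : set G) x u : lcos x H = lcos u H -> H one ->
  H (mul (inv x) u).
Proof.
move=> e H1; have : lcos x H u by rewrite e; exact: lcoset_self.
by case=> h Hh <-; rewrite (mulKg TG).
Qed.

Lemma lcoset_open (H : set G) x : open H -> open (lcos x H).
Proof.
move=> oH; rewrite openE => y [h Hh <-].
have nH : nbhs (mul (inv x) (mul x h)) H.
  by rewrite (mulKg TG); apply: open_nbhs_nbhs.
move: (@lmul_near _ _ _ _ TG (inv x) (mul x h) H nH).
apply: filterS => z Hz; exists (mul (inv x) z) => //; by rewrite (mulVKg TG).
Qed.

Lemma subgroupI (U W : set G) : is_subgroup mul inv one U -> is_subgroup mul inv one W ->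
  is_subgroup mul inv one (U `&` W).
Proof.
case=> U1 Um Ui [W1 Wm Wi]; split => //.
- by move=> x y [Ux Wx] [Uy Wy]; split; [exact: Um | exact: Wm].
- by move=> x [Ux Wx]; split; [exact: Ui | exact: Wi].
Qed.

Lemma index_le U H s : lcov U H s -> Defs.index mul U H <= size s.
Proof.
move=> cv; rewrite /Defs.index; set CS := [set _ | _ in _].
have [fin|inf] := pselect (finite_set CS); last first.
  by rewrite /fset_set; case: pselect => [a|_]; [case: inf | rewrite cardfs0].
rewrite -(size_map (fun x => lcos x H) s).
apply: uniq_leq_size; first exact: fset_uniq.
move=> C; rewrite in_fset_set // in_setE => -[u Uu <-].
have [x xs e] := cv u Uu; rewrite -e; exact: map_f.
Qed.

Lemma cover_ex U W : cos U -> cos W ->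
  exists s, size s = kk U W /\ lcov U (U `&` W) s.
Proof.
move=> [sU cU oU] [sW cW oW].
set H := U `&` W.
have sH : is_subgroup mul inv one H by exact: subgroupI.
have oH : open H by exact: openI.
set CS := [set lcos x H | x in U].
have fin : finite_set CS.
  move/compact_near_coveringP: cU => cov.
  pose F := filter_from [set: {fset G}] (fun X => [set D : {fset G} | (X `<=` D)%fset]).
  have FF : Filter F.
    apply: filter_from_filter; first by exists fset0.
    move=> X Y _ _; exists (X `|` Y)%fset => // D /= XYD; split.
      exact: fsubset_trans (fsubsetUl _ _) XYD.
    exact: fsubset_trans (fsubsetUr _ _) XYD.
  have := cov {fset G} F (fun D x => exists2 d, d \in D & U d /\ lcos d H x) FF.
  case.
    move=> x Ux; exists (lcos x H, [set D : {fset G} | x \in D]).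
      split; first by apply: open_nbhs_nbhs; split; [exact: lcoset_open | case: sH => ? _ _; exact: lcoset_self].
      by exists [fset x]%fset => // D /=; rewrite fsub1set.
    by case=> x' D /= [Hx' xD]; exists x.
  move=> X _ hX; have hD := hX X (fsubset_refl X).
  apply: (@sub_finite_set _ _ ((fun d => lcos d H) @` [set` X])).
    move=> C [u Uu <-]; have [d dX [Ud ud]] := hD u Uu.
    by exists d => //; rewrite (lcoset_eqP sH ud).
  exact: finite_image (finite_fset X).
pose rep (C : set G) : G :=
  if pselect (exists x, C = lcos x H) is left e then projT1 (cid e) else one.
have repP : forall x, lcos (rep (lcos x H)) H = lcos x H.
  move=> x; rewrite /rep; case: pselect => [e|n]; last by exfalso; apply: n; exists x.
  by case: (cid e) => y /= ->.
exists (map rep (fset_set CS)); split; first by rewrite size_map.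
move=> u Uu; exists (rep (lcos u H)); last exact: repP.
apply: map_f; rewrite in_fset_set // in_setE; by exists u.
Qed.

Lemma kpos U W : cos U -> cos W -> 0 < kk U W.
Proof.
move=> cU cW; have [s [ss cs]] := cover_ex cU cW.
have U1 : U one by case: cU => -[].
have [x xs _] := cs one U1; rewrite -ss; by case: s {ss cs} xs.
Qed.

Lemma ktri U V W : cos U -> cos V -> cos W -> kk U W <= kk U V * kk V W.
Proof.
move=> cU cV cW.
have [s [ss cs]] := cover_ex cU cV; have [t [st ct]] := cover_ex cV cW.
have sU := cU; case: sU => -[U1 Um Ui] _ _.
have sV := cV; case: sV => -[V1 Vm Vi] _ _.
have sW := cW; case: sW => -[W1 Wm Wi] _ _.
have sUW : is_subgroup mul inv one (U `&` W) by apply: subgroupI; [case: cU|case: cW].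
have sVW : is_subgroup mul inv one (V `&` W) by apply: subgroupI; [case: cV|case: cW].
pose pk (y : G) : G :=
  if pselect (exists y', (U `&` V) y' /\ lcos y (V `&` W) y') is left e
  then projT1 (cid e) else y.
have pkP : forall y, (exists y', (U `&` V) y' /\ lcos y (V `&` W) y') ->
    (U `&` V) (pk y) /\ lcos y (V `&` W) (pk y).
  move=> y ex; rewrite /pk; case: pselect => [e|//]; exact: projT2 (cid e).
rewrite -ss -st -(size_allpairs (fun x y => mul x (pk y))).
apply: index_le => u Uu.
have [x xs ex] := cs u Uu.
have [Ux' Vx'] : (U `&` V) (mul (inv x) u) by apply: lcoset_mulV ex _.
have [y yt ey] := ct _ Vx'.
have vin : lcos y (V `&` W) (mul (inv x) u) by rewrite ey; exact: lcoset_self.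
have [[Uy' Vy'] iny'] := pkP y (ex_intro _ _ (conj (conj Ux' Vx') vin)).
have [hV hW] : (V `&` W) (mul (inv (pk y)) (mul (inv x) u)).
  apply: lcoset_mulV => //; by rewrite (lcoset_eqP sVW iny') ey.
have hU : U (mul (inv (pk y)) (mul (inv x) u)) by apply: Um => //; exact: Ui.
exists (mul x (pk y)); first exact: (allpairs_f (fun x y => mul x (pk y)) xs yt).
apply/esym; apply: lcoset_eqP => //.
exists (mul (inv (pk y)) (mul (inv x) u)) => //.
by rewrite -(mulA TG) (mulVKg TG) (mulVKg TG).
Qed.

Lemma lcoset_img (a : G -> G) (H : set G) x :
  (forall x y, a (mul x y) = mul (a x) (a y)) ->
  a @` lcos x H = lcos (a x) (a @` H).
Proof.
move=> am; apply/seteqP; split.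
  by move=> _ [_ [h Hh <-] <-]; exists (a h); [exists h|rewrite am].
by move=> _ [_ [h Hh <-] <-]; exists (mul x h); [exists h|rewrite am].
Qed.

Lemma image_setI_inj (a : G -> G) (A B : set G) : injective a ->
  a @` (A `&` B) = a @` A `&` a @` B.
Proof.
move=> ia; apply/seteqP; split.
  by move=> _ [x [Ax Bx] <-]; split; exists x.
move=> z [[x Ax e1] [y By e2]]; exists x => //; split => //.
by have -> : x = y by apply: ia; rewrite e1 e2.
Qed.

Lemma kaut a U W : (forall x y, a (mul x y) = mul (a x) (a y)) -> injective a ->
  cos U -> cos W -> kk (a @` U) (a @` W) <= kk U W.
Proof.
move=> am ia cU cW; have [s [ss cs]] := cover_ex cU cW.
rewrite -ss /kk -image_setI_inj // -(size_map a s).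
apply: index_le => _ [u Uu <-]; have [x xs e] := cs u Uu.
exists (a x); first exact: map_f.
by rewrite -!lcoset_img // e.
Qed.

Local Open Scope R_scope.

Lemma distE U W : Defs.dist mul U W = ln (INR (kk U W * kk W U)).
Proof. by []. Qed.

Lemma dist_sym U W : Defs.dist mul U W = Defs.dist mul W U.
Proof. by rewrite !distE mulnC. Qed.

Lemma ln_le' x y : 0 < x -> x <= y -> ln x <= ln y.
Proof.
move=> x0 /Rle_lt_or_eq_dec [lt|->]; last exact: Rle_refl.
by apply: Rlt_le; apply: ln_increasing.
Qed.

Lemma INR_pos (n : nat) : (0 < n)%nat -> 0 < INR n.
Proof. by move=> h; apply: lt_0_INR; apply/ltP. Qed.

Lemma dist_tri U V W : cos U -> cos V -> cos W ->
  Defs.dist mul U W <= Defs.dist mul U V + Defs.dist mul V W.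
Proof.
move=> cU cV cW; rewrite !distE -ln_mult; last by apply: INR_pos; rewrite muln_gt0 !kpos.
  apply: ln_le'; first by apply: INR_pos; rewrite muln_gt0 !kpos.
  rewrite -mult_INR; apply: le_INR; apply/leP.
  apply: leq_trans (leq_mul (ktri cU cV cW) (ktri cW cV cU)) _.
  by rewrite [X in (X <= _)%nat]mulnACA [(kk V W * _)%nat]mulnC -mulnACA [(kk W V * _)%nat]mulnC.
by apply: INR_pos; rewrite muln_gt0 !kpos.
Qed.

Lemma dist_aut a U W : (forall x y, a (mul x y) = mul (a x) (a y)) -> injective a ->
  cos U -> cos W -> cos (a @` U) -> cos (a @` W) ->
  Defs.dist mul (a @` U) (a @` W) <= Defs.dist mul U W.
Proof.
move=> am ia cU cW caU caW; rewrite !distE.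
apply: ln_le'; first by apply: INR_pos; rewrite muln_gt0 !kpos.
apply: le_INR; apply/leP; apply: leq_mul; exact: kaut.
Qed.

End Metric.

Section Auts.
Variable G : topologicalType.
Variables (mul : G -> G -> G) (inv : G -> G) (one : G).
Hypothesis TG : is_topological_group mul inv one.

Local Notation cos := (compact_open_subgroup mul inv one).
Local Notation Aut := (is_automorphism mul).
Local Notation dst := (Defs.dist mul).

Lemma inv_unique (f g g' : G -> G) : inverse_fun f g -> inverse_fun f g' -> g = g'.
Proof.
move=> [g1 g2] [h1 h2]; apply: funext => x.
by rewrite -[in LHS](h2 x) g1.
Qed.

Lemma inverse_sym (f g : G -> G) : inverse_fun f g -> inverse_fun g f.
Proof. by case. Qed.

Lemma inverse_comp (f g f' g' : G -> G) : inverse_fun f f' -> inverse_fun g g' ->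
  inverse_fun (f \o g) (g' \o f').
Proof. by move=> [f1 f2] [g1 g2]; split => x /=; rewrite ?f1 ?g1 ?g2 ?f2. Qed.

Lemma mul_eq1 y z : mul y z = one -> z = inv y.
Proof. by move=> e; rewrite -(mulKg TG y z) e (mulg1 TG). Qed.

Lemma aut_one f : Aut f -> f one = one.
Proof.
case=> fm _ _; have e : mul (f one) (f one) = f one by rewrite -fm (mulg1 TG).
by rewrite -(mulKg TG (f one) (f one)) e (mulVg TG).
Qed.

Lemma aut_invc f x : Aut f -> f (inv x) = inv (f x).
Proof.
move=> fA; apply: mul_eq1; case: (fA) => fm _ _.
by rewrite -fm (mulgV TG) aut_one.
Qed.

Lemma aut_inj f : Aut f -> injective f.
Proof. by case=> _ _ [g [[g1 _] _]] x y e; rewrite -(g1 x) e g1. Qed.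

Lemma aut_inv f g : Aut f -> inverse_fun f g -> Aut g.
Proof.
move=> [fm fc [g' [ig' cg']]] ig.
have eg := inv_unique ig ig'; subst g'.
case: (ig) => g1 g2; split => //.
- by move=> x y; rewrite -{1}(g2 x) -{1}(g2 y) -fm g1.
- by exists f; split => //; exact: inverse_sym.
Qed.

Lemma aut_comp f h : Aut f -> Aut h -> Aut (f \o h).
Proof.
move=> [fm fc [f' [if' cf']]] [hm hc [h' [ih' ch']]]; split.
- by move=> x y /=; rewrite hm fm.
- by move=> x; apply: continuous_comp; [exact: hc | exact: fc].
- exists (h' \o f'); split; first exact: inverse_comp.
  by move=> x; apply: continuous_comp; [exact: cf' | exact: ch'].
Qed.

Lemma aut_cos f V : Aut f -> cos V -> cos (f @` V).
Proof.
move=> fA [[V1 Vm Vi] cV oV]; have fA' := fA; case: fA' => fm fc [g [[g1 g2] cg]].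
split.
- split.
  + by exists one => //; exact: aut_one.
  + by move=> _ _ [x Vx <-] [y Vy <-]; exists (mul x y); [exact: Vm | rewrite fm].
  + by move=> _ [x Vx <-]; exists (inv x); [exact: Vi | exact: aut_invc].
- by apply: continuous_compact => //; exact: continuous_subspaceT.
- have -> : f @` V = g @^-1` V.
    apply/seteqP; split; first by move=> _ [x Vx <-]; rewrite /= g1.
    by move=> y Vgy; exists (g y) => //.
  by move/continuousP: cg; apply.
Qed.

Lemma dist_autA a U W : Aut a -> cos U -> cos W ->
  (dst (a @` U) (a @` W) <= dst U W)%R.
Proof.
move=> aA cU cW; have [am _ _] := aA.
exact: (dist_aut TG am (aut_inj aA) cU cW (aut_cos aA cU) (aut_cos aA cW)).
Qed.

Lemma dist_tri' U V W : cos U -> cos V -> cos W ->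
  (dst U W <= dst U V + dst V W)%R.
Proof. exact: dist_tri. Qed.

Lemma change_base (B : set (G -> G)) : (forall b, B b -> Aut b) ->
  bounded_set mul inv one B -> forall V, cos V ->
  exists M, forall b c, B b -> B c -> (dst (b @` V) (c @` V) <= M)%R.
Proof.
move=> BA [V0 [cV0 [M0 hM]]] V cV.
exists (dst V V0 + M0 + dst V0 V)%R => b c Bb Bc.
have bA := BA _ Bb; have cA := BA _ Bc.
have h1 := dist_tri' (aut_cos bA cV) (aut_cos bA cV0) (aut_cos cA cV).
have h2 := dist_tri' (aut_cos bA cV0) (aut_cos cA cV0) (aut_cos cA cV).
have h3 := dist_autA bA cV cV0.
have h4 := dist_autA cA cV0 cV.
have h5 := hM b c Bb Bc.
lra.
Qed.

Lemma bounded_sub (B1 B2 : set (G -> G)) : B1 `<=` B2 ->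
  bounded_set mul inv one B2 -> bounded_set mul inv one B1.
Proof.
move=> s [V [cV [M hM]]]; exists V; split => //; exists M => b c /s Bb /s Bc.
exact: hM.
Qed.

End Auts.

Theorem proposition1 (G : topologicalType) (mul : G -> G -> G) (inv : G -> G) (one : G)
  (H : set (G -> G)) :
  is_tdlc_group mul inv one ->
  automorphism_group mul H ->
  normal_subgroup (FCd mul inv one H) H /\
  FCd mul inv one (FCd mul inv one H) = FCd mul inv one H.
Proof.
move=> [TG TD LC] [Haut Hid Hcomp Hinv].
have [V0 cV0] := cos_exists TG TD LC.
set N := FCd mul inv one H.
have classA : forall phi, H phi -> forall f, conj_class H phi f -> is_automorphism mul f.
  move=> phi Hphi f [psi [psi' [Hpsi ipsi ->]]].
  apply: aut_comp; first by apply: aut_comp; exact: Haut.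
  exact: aut_inv (Haut _ Hpsi) ipsi.
have self : forall phi, conj_class H phi phi.
  by move=> phi; exists id, id; split.
have Hinv' : forall f g, H f -> inverse_fun f g -> H g.
  move=> f g Hf ifg; have [g' Hg' ifg'] := Hinv f Hf.
  by rewrite (inv_unique ifg ifg').
have Nid : N id.
  split => //; exists V0; split => //; exists (Defs.dist mul V0 V0).
  move=> b c [psi [psi' [_ [i1 i2] eb]]] [chi [chi' [_ [j1 j2] ec]]].
  have -> : b = id by rewrite eb; apply: funext => x /=; exact: i2.
  have -> : c = id by rewrite ec; apply: funext => x /=; exact: j2.
  rewrite image_id; exact: Rle_refl.
have Ncomp : forall f g, N f -> N g -> N (f \o g).
  move=> f g [Hf bdf] [Hg bdg]; split; first exact: Hcomp.
  have [Mf hf] := change_base TG (classA f Hf) bdf cV0.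
  have [Mg hg] := change_base TG (classA g Hg) bdg cV0.
  set c0 := Defs.dist mul (g @` V0) V0.
  exists V0; split => //.
  exists (Mg + (Mg + c0) + Mf + (Mg + c0))%R => b c.
  move=> [psi [psi' [Hpsi ipsi eb]]] [chi [chi' [Hchi ichi ec]]].
  pose bf := psi \o f \o psi'; pose bg := psi \o g \o psi'.
  pose cf := chi \o f \o chi'; pose cg := chi \o g \o chi'.
  have Cbf : conj_class H f bf by exists psi, psi'.
  have Cbg : conj_class H g bg by exists psi, psi'.
  have Ccf : conj_class H f cf by exists chi, chi'.
  have Ccg : conj_class H g cg by exists chi, chi'.
  have ebf : b = bf \o bg.
    by rewrite eb; apply: funext => x; rewrite /bf /bg /= (proj1 ipsi).
  have ecf : c = cf \o cg.
    by rewrite ec; apply: funext => x; rewrite /cf /cg /= (proj1 ichi).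
  rewrite ebf ecf -(image_comp bg bf) -(image_comp cg cf).
  have bfA := classA f Hf bf Cbf; have bgA := classA g Hg bg Cbg.
  have cfA := classA f Hf cf Ccf; have cgA := classA g Hg cg Ccg.
  have gA := Haut g Hg.
  have cW := aut_cos TG cgA cV0.
  have cbgV := aut_cos TG bgA cV0.
  have h1 := dist_tri' TG (aut_cos TG bfA cbgV) (aut_cos TG bfA cW) (aut_cos TG cfA cW).
  have h2 := dist_autA TG bfA cbgV cW.
  have h3 := hg bg cg Cbg Ccg.
  have h4 := dist_tri' TG (aut_cos TG bfA cW) (aut_cos TG bfA cV0) (aut_cos TG cfA cW).
  have h5 := dist_tri' TG (aut_cos TG bfA cV0) (aut_cos TG cfA cV0) (aut_cos TG cfA cW).
  have h6 := dist_autA TG bfA cW cV0.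
  have h7 := dist_autA TG cfA cV0 cW.
  have h8 := @dist_sym _ mul V0 (cg @` V0).
  have h9 := hf bf cf Cbf Ccf.
  have h10 := dist_tri' TG cW (aut_cos TG gA cV0) cV0.
  have h11 := hg cg g Ccg (self g).
  rewrite /c0 in h10 *.
  lra.
have Ninv : forall f g, N f -> inverse_fun f g -> N g.
  move=> f g [Hf bdf] ifg; have Hg := Hinv' f g Hf ifg; split => //.
  have [Mf hf] := change_base TG (classA f Hf) bdf cV0.
  set c0 := Defs.dist mul V0 (f @` V0).
  have key : forall b, conj_class H g b -> (Defs.dist mul (b @` V0) V0 <= c0 + Mf)%R.
    move=> b [psi [psi' [Hpsi ipsi eb]]].
    pose bf := psi \o f \o psi'.
    have Cbf : conj_class H f bf by exists psi, psi'.
    have bA : is_automorphism mul b by apply: (classA g Hg); exists psi, psi'.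
    have bfA := classA f Hf bf Cbf.
    have e : b @` (bf @` V0) = V0.
      rewrite image_comp.
      have -> : b \o bf = id.
        apply: funext => x; rewrite eb /bf /=.
        by rewrite (proj1 ipsi) (proj1 ifg) (proj2 ipsi).
      exact: image_id.
    have h1 := dist_autA TG bA cV0 (aut_cos TG bfA cV0); rewrite e in h1.
    have h2 := dist_tri' TG cV0 (aut_cos TG (Haut f Hf) cV0) (aut_cos TG bfA cV0).
    have h3 := hf f bf (self f) Cbf.
    rewrite /c0; lra.
  exists V0; split => //; exists (2 * (c0 + Mf))%R => b c Cb Cc.
  have bA : is_automorphism mul b by exact: (classA g Hg).
  have cA : is_automorphism mul c by exact: (classA g Hg).
  have h1 := dist_tri' TG (aut_cos TG bA cV0) cV0 (aut_cos TG cA cV0).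
  have h2 := @dist_sym _ mul V0 (c @` V0).
  have h3 := key b Cb; have h4 := key c Cc.
  lra.
have Nconj : forall psi psi' f, H psi -> inverse_fun psi psi' -> N f ->
    N (psi \o f \o psi').
  move=> psi psi' f Hpsi ipsi [Hf bf]; split.
    by apply: (Hcomp); [apply: (Hcomp) | exact: (Hinv' _ _ Hpsi ipsi)].
  apply: bounded_sub bf => _ [chi [chi' [Hchi ichi ->]]].
  exists (chi \o psi), (psi' \o chi'); split => //; [exact: Hcomp | exact: inverse_comp].
split; first by split => //; move=> f [].
apply/seteqP; split; first by move=> f [].
move=> f [Hf bf]; split; first by split.
apply: bounded_sub bf => _ [psi [psi' [[Hpsi _] ipsi ->]]]; by exists psi, psi'.
Qed.
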